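(* Let $\tau_i$ be an HC task, let $0\le t_I\le t_E\le t$, and suppose $\tau_i$ switches to HC mode at some time $t_i\in[t_I,t_E]$. Then, as a function of $t_i\in[t_I,t_E]$, $\mathrm{dbf}(\tau_i,t,t_i)$ is maximized when $t_i=t_E$ or $t_i=t_I$; that is, $\mathrm{dbf}(\tau_i,t,t_i)\le\max\{\mathrm{dbf}(\tau_i,t,t_I),\mathrm{dbf}(\tau_i,t,t_E)\}$ for all $t_i\in[t_I,t_E]$.
   Context: $\tau_i=(T_i,HC,\{C_i^L,C_i^H\},D_i)$ is a high-criticality sporadic task with minimum inter-release separation $T_i$, relative deadline $D_i\le T_i$, WCETs $C_i^L<C_i^H$, and tightened deadline $D_i^L\le D_i$. For a time interval $[0,t)$ and mode-switch instant $t_i\le t$, the demand of the job $J_i^A$ (the last job released at or before $t_i$, with release time $r=r(J_i^A)$) is $\mathrm{dbf}(J_i^A,t,t_i)=C_i^L$ if $r+D_i^L<t_i$; $=C_i^H$ if $r+D_i^L\ge t_i$ and $r+D_i\le t$; $=\min\{t_i-r,C_i^L\}$ if $t_i\le r+D_i^L\le t$ and $r+D_i>t$; $=0$ if $r+D_i^L>t$. Define $\mathrm{dbf}_{[b]}(\tau_i,t,t_i)=\lfloor t_i/T_i\rfloor C_i^L+\mathrm{dbf}(J_i^A,t,t_i)$ with $r(J_i^A)=\lfloor t_i/T_i\rfloor T_i$; $\mathrm{dbf}_{[c]}(\tau_i,t,t_i)=b_iC_i^L+\mathrm{dbf}(J_i^A,t,t_i)+a_iC_i^H$, where $s=t-D_i-\lfloor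 (t-D_i)/T_i\rfloor T_i$, $b_i=\lfloor (t_i-s)/T_i\rfloor$, $a_i=\lfloor (t-D_i)/T_i\rfloor-b_i$, and $r(J_i^A)=s+b_iT_i$. Then $\mathrm{dbf}(\tau_i,t,t_i)$ is: $\mathrm{dbf}_{[b]}(\tau_i,t,t_i)$ if $t-t_i<D_i-D_i^L$; $\mathrm{dbf}_{[c]}(\tau_i,t,t_i)$ if $t-t_i\ge D_i$; and $\max\{\mathrm{dbf}_{[b]}(\tau_i,t,t_i),\mathrm{dbf}_{[c]}(\tau_i,t,t_i)\}$ if $D_i-D_i^L\le t-t_i<D_i$. *)

(* Defs.v *)
From HB Require Import structures.
From mathcomp Require Import all_boot all_order all_algebra.
From mathcomp Require Import reals.
Set Implicit Arguments. Unset Strict Implicit. Unset Printing Implicit Defensive.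
Import Order.TTheory GRing.Theory Num.Theory.
Local Open Scope ring_scope.

(* A high-criticality sporadic task tau_i = (T_i, HC, {C_i^L, C_i^H}, D_i)
   together with its tightened (virtual) deadline D_i^L. *)
Record hc_task (R : realType) := HCTask {
  T_ : R;
  CL : R;
  CH : R;
  D_ : R;
  DL : R
}.

Definition valid_hc_task (R : realType) (tk : hc_task R) : Prop :=
  0 < T_ tk /\ 0 < CL tk /\ CL tk < CH tk /\ 0 < DL tk /\
  DL tk <= D_ tk /\ D_ tk <= T_ tk.

Definition rfloor (R : realType) (x : R) : R := (Num.floor x)%:~R.

(* dbf(J_i^A, t, t_i) for the carry-over job released at r *)
Definition dbf_job (R : realType) (tk : hc_task R) (r t ti : R) : R :=
  if r + DL tk < ti then CL tk
  else if r + D_ tk <= t then CH tk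
  else if r + DL tk <= t then Num.min (ti - r) (CL tk)
  else 0.

Definition dbf_b (R : realType) (tk : hc_task R) (t ti : R) : R :=
  let k := rfloor (ti / T_ tk) in
  k * CL tk + dbf_job tk (k * T_ tk) t ti.

Definition dbf_c (R : realType) (tk : hc_task R) (t ti : R) : R :=
  let n := rfloor ((t - D_ tk) / T_ tk) in
  let s := t - D_ tk - n * T_ tk in
  let b := rfloor ((ti - s) / T_ tk) in
  let a := n - b in
  b * CL tk + dbf_job tk (s + b * T_ tk) t ti + a * CH tk.

Definition dbf (R : realType) (tk : hc_task R) (t ti : R) : R :=
  if t - ti < D_ tk - DL tk then dbf_b tk t ti
  else if D_ tk <= t - ti then dbf_c tk t ti
  else Num.max (dbf_b tk t ti) (dbf_c tk t ti).

(* Main.v *)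
Require Import Defs.
From HB Require Import structures.
From mathcomp Require Import all_boot all_order all_algebra.
From mathcomp Require Import reals.
From mathcomp Require Import ring lra.
Import Order.TTheory GRing.Theory Num.Theory.
Local Open Scope ring_scope.

Section H.
Variable R : realType.

Lemma int_lt1 (i j : int) : (i%:~R : R) < j%:~R + 1 -> (i%:~R : R) <= j%:~R.
Proof.
move=> h; rewrite ler_int.
have e : ((j + 1)%:~R : R) = j%:~R + 1 by rewrite intrD.
rewrite -e ltr_int in h.
by rewrite -ltzD1.
Qed.

Lemma int_le_cases (i j : int) : (i%:~R : R) <= j%:~R ->
  (i%:~R : R) = j%:~R \/ (i%:~R : R) + 1 <= j%:~R.
Proof.
rewrite ler_int le_eqVlt => /orP[/eqP->|h]; first by left.
right; have e : ((i + 1)%:~R : R) = i%:~R + 1 by rewrite intrD.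
by rewrite -e ler_int lezD1.
Qed.

Lemma floorT (T x : R) : 0 < T ->
  rfloor (x / T) * T <= x /\ x < rfloor (x / T) * T + T.
Proof.
move=> hT; have := floor_itv (x / T); rewrite /rfloor intrD.
move=> /andP[h1 h2].
have e : x / T * T = x by rewrite mulfVK // gt_eqF.
split; first by rewrite -{2}e ler_pM2r.
by rewrite -{1}e -[X in _ < _ + X]mul1r -mulrDl ltr_pM2r.
Qed.

Definition hjob (tk : hc_task R) (r t x : R) : R :=
  if r + DL tk < x then CL tk
  else if r + DL tk <= t then Num.min (x - r) (CL tk) else 0.

Lemma hjob_bnd (tk : hc_task R) r t x : valid_hc_task tk -> r <= x ->
  0 <= hjob tk r t x <= CL tk.
Proof.
case=> hT [hCL [hCH [hDL [hD hDT]]]] hr; rewrite /hjob.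
case: ifP => _; first by rewrite lexx andbT ltW.
case: ifP => _; last by rewrite lexx ltW.
by rewrite ge_min lexx orbT le_min subr_ge0 hr ltW.
Qed.

Lemma hjob_mono (tk : hc_task R) r t x y : valid_hc_task tk -> r <= x -> x <= y -> hjob tk r t x <= hjob tk r t y.
Proof.
case=> hT [hCL [hCH [hDL [hD hDT]]]] hr hxy; rewrite /hjob.
case: ifP => h1; first by rewrite (lt_le_trans h1 hxy).
case: ifP => h2.
  case: ifP => _; first by rewrite ge_min lexx orbT.
  by rewrite le_min !ge_min lexx orbT andbT lerD2r hxy.
case: ifP => _; first exact: ltW.
by rewrite lexx.
Qed.

Lemma job_le_CH (tk : hc_task R) r t x : valid_hc_task tk -> r <= x -> dbf_job tk r t x <= CH tk.
Proof.
case=> hT [hCL [hCH [hDL [hD hDT]]]] hr; rewrite /dbf_job.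
case: ifP => _; first exact: ltW.
case: ifP => _; first exact: lexx.
case: ifP => _; last by apply: ltW; apply: lt_trans hCH.
by rewrite ge_min (ltW hCH) orbT.
Qed.

Lemma job_ge_CL (tk : hc_task R) r t x : valid_hc_task tk -> r + D_ tk <= t -> CL tk <= dbf_job tk r t x.
Proof.
case=> hT [hCL [hCH [hDL [hD hDT]]]] hr; rewrite /dbf_job.
case: ifP => _; first exact: lexx.
by rewrite hr ltW.
Qed.

Lemma job_anti (tk : hc_task R) r t x y : valid_hc_task tk -> r <= x -> x <= y -> r + D_ tk <= t ->
  dbf_job tk r t y <= dbf_job tk r t x.
Proof.
move=> v hr hxy hD.
have hy : r <= y by apply: le_trans hxy.
rewrite {2}/dbf_job hD.
case: ifP => h1.
  by rewrite /dbf_job (lt_le_trans h1 hxy).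
exact: job_le_CH.
Qed.

Lemma job_hjob (tk : hc_task R) r t x : valid_hc_task tk -> r <= x ->
  hjob tk r t x <= dbf_job tk r t x /\
  (dbf_job tk r t x = hjob tk r t x \/
   (r + D_ tk <= t /\ x <= r + DL tk /\ dbf_job tk r t x = CH tk)).
Proof.
case=> hT [hCL [hCH [hDL [hD hDT]]]] hr; rewrite /dbf_job /hjob.
case: ifP => h1; first by split; [exact: lexx | left].
have hCH0 : 0 <= CH tk by apply: ltW; apply: lt_trans hCH.
case: (boolP (r + D_ tk <= t)) => h3.
  have h2 : r + DL tk <= t by apply: le_trans h3; rewrite lerD2l.
  rewrite h2; split; first by rewrite ge_min (ltW hCH) orbT.
  by right; split => //; split => //; rewrite leNgt h1.
case: ifP => h2; by split; [exact: lexx | left].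
Qed.

Lemma rf_lt1 (a b : R) : rfloor a < rfloor b + 1 -> rfloor a <= rfloor b.
Proof. exact: int_lt1. Qed.

Lemma rf_cases (a b : R) : rfloor a <= rfloor b ->
  rfloor a = rfloor b \/ rfloor a + 1 <= rfloor b.
Proof. exact: int_le_cases. Qed.

Lemma C_anti (tk : hc_task R) t x y : valid_hc_task tk -> x <= y -> x < t ->
  dbf_c tk t y <= dbf_c tk t x.
Proof.
move=> v hxy hxt; have v' := v; case: v' => hT [hCL [hCH [hDL [hD hDT]]]].
rewrite /dbf_c.
have [hn1 hn2] := floorT _ (t - D_ tk) hT.
set n := rfloor ((t - D_ tk) / T_ tk) in hn1 hn2 *.
set s := t - D_ tk - n * T_ tk.
have [hx1 hx2] := floorT _ (x - s) hT.
have [hy1 hy2] := floorT _ (y - s) hT.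
set bx := rfloor ((x - s) / T_ tk) in hx1 hx2 *.
set b2 := rfloor ((y - s) / T_ tk) in hy1 hy2 *.
have hbxn : bx <= n.
  have h : bx * T_ tk < (n + 1) * T_ tk.
    by rewrite mulrDl mul1r; rewrite /s in hx1 hx2; lra.
  by apply: rf_lt1; rewrite -(ltr_pM2r hT).
have hrD : s + bx * T_ tk + D_ tk <= t.
  have : bx * T_ tk <= n * T_ tk by rewrite ler_pM2r.
  rewrite /s; lra.
have hbb : bx <= b2.
  have h : bx * T_ tk < (b2 + 1) * T_ tk.
    by rewrite mulrDl mul1r; lra.
  by apply: rf_lt1; rewrite -(ltr_pM2r hT).
have hJx := job_ge_CL _ _ _ x v hrD.
have hJy := job_le_CH _ (s + b2 * T_ tk) t y v.
case: (rf_cases _ _ hbb) => e.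
  rewrite -/bx -/b2 in e; rewrite e in hrD *.
  have := job_anti _ (s + b2 * T_ tk) t x y v.
  move=> /(_ ltac:(rewrite -e; lra) hxy hrD) h; lra.
rewrite -/bx -/b2 in e.
have := hJy ltac:(lra) => h.
have hp : 0 <= (b2 - bx - 1) * (CH tk - CL tk).
  by apply: mulr_ge0; lra.
nra.
Qed.

Definition Hf (tk : hc_task R) t x :=
  rfloor (x / T_ tk) * CL tk + hjob tk (rfloor (x / T_ tk) * T_ tk) t x.

Lemma H_mono (tk : hc_task R) t x y : valid_hc_task tk -> x <= y -> Hf tk t x <= Hf tk t y.
Proof.
move=> v hxy; have v' := v; case: v' => hT [hCL [hCH [hDL [hD hDT]]]].
rewrite /Hf.
have [hx1 hx2] := floorT _ x hT.
have [hy1 hy2] := floorT _ y hT.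
set kx := rfloor (x / T_ tk) in hx1 hx2 *.
set ky := rfloor (y / T_ tk) in hy1 hy2 *.
have hkk : kx <= ky.
  have h : kx * T_ tk < (ky + 1) * T_ tk.
    by rewrite mulrDl mul1r; lra.
  by apply: rf_lt1; rewrite -(ltr_pM2r hT).
have /andP[hx3 hx4] := hjob_bnd _ _ t _ v hx1.
have /andP[hy3 hy4] := hjob_bnd _ _ t _ v hy1.
case: (rf_cases _ _ hkk) => e; rewrite -/kx -/ky in e.
  rewrite e in hx1 hx2 hx3 hx4 *.
  have := hjob_mono _ _ t _ _ v hx1 hxy; lra.
have hp : 0 <= (ky - kx - 1) * CL tk by apply: mulr_ge0; lra.
nra.
Qed.

Lemma B_cases (tk : hc_task R) t x : valid_hc_task tk ->
  Hf tk t x <= dbf_b tk t x /\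
  (dbf_b tk t x = Hf tk t x \/
   (rfloor (x / T_ tk) * T_ tk + D_ tk <= t /\ x <= rfloor (x / T_ tk) * T_ tk + DL tk /\
    dbf_b tk t x = rfloor (x / T_ tk) * CL tk + CH tk)).
Proof.
move=> v; have v' := v; case: v' => hT [hCL [hCH [hDL [hD hDT]]]].
rewrite /dbf_b /Hf /=.
have [hx1 hx2] := floorT _ x hT.
have [h1 h2] := job_hjob _ _ t _ v hx1.
split; first by rewrite lerD2l.
case: h2 => [->|[a [b ->]]]; first by left.
by right.
Qed.

Lemma CH_case (tk : hc_task R) t x : valid_hc_task tk -> t - D_ tk < x -> x < t ->
  rfloor (x / T_ tk) * T_ tk + D_ tk <= t -> x <= rfloor (x / T_ tk) * T_ tk + DL tk ->
  rfloor (x / T_ tk) * CL tk + CH tk <= dbf_c tk t x.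
Proof.
move=> v hx hxt hk1 hk2; have v' := v; case: v' => hT [hCL [hCH [hDL [hD hDT]]]].
have [hk3 hk4] := floorT _ x hT.
set k := rfloor (x / T_ tk) in hk1 hk2 hk3 hk4 *.
rewrite /dbf_c.
have [hn1 hn2] := floorT _ (t - D_ tk) hT.
set n := rfloor ((t - D_ tk) / T_ tk) in hn1 hn2 *.
set s := t - D_ tk - n * T_ tk.
have [hx1 hx2] := floorT _ (x - s) hT.
set b := rfloor ((x - s) / T_ tk) in hx1 hx2 *.
have hbn : b <= n.
  have h : b * T_ tk < (n + 1) * T_ tk.
    by rewrite mulrDl mul1r; rewrite /s in hx1 hx2; lra.
  by apply: rf_lt1; rewrite -(ltr_pM2r hT).
have hnb : n <= b.
  have h : n * T_ tk < (b + 1) * T_ tk.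
    by rewrite mulrDl mul1r; rewrite /s in hx1 hx2; lra.
  by apply: rf_lt1; rewrite -(ltr_pM2r hT).
have hkn : k <= n.
  have h : k * T_ tk < (n + 1) * T_ tk.
    by rewrite mulrDl mul1r; lra.
  by apply: rf_lt1; rewrite -(ltr_pM2r hT).
have e : b = n by apply/eqP; rewrite eq_le hbn hnb.
rewrite e /dbf_job.
have -> : (s + n * T_ tk + DL tk < x) = false.
  by apply/negbTE; rewrite -leNgt /s; lra.
have -> : (s + n * T_ tk + D_ tk <= t) = true.
  by apply/idP; rewrite /s; lra.
have hp : 0 <= (n - k) * CL tk by apply: mulr_ge0; lra.
nra.
Qed.

Lemma dbf_geC (tk : hc_task R) t x : valid_hc_task tk -> ~~ (t - x < D_ tk - DL tk) ->
  dbf_c tk t x <= dbf tk t x.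
Proof.
move=> v h; rewrite /dbf (negbTE h).
case: ifP => _; first exact: lexx.
by rewrite le_max lexx orbT.
Qed.

Lemma dbf_geB (tk : hc_task R) t x : valid_hc_task tk -> t - x < D_ tk ->
  dbf_b tk t x <= dbf tk t x.
Proof.
move=> v h; rewrite /dbf.
case: ifP => _; first exact: lexx.
have -> : (D_ tk <= t - x) = false by rewrite leNgt h.
by rewrite le_max lexx.
Qed.

Lemma main_sec (tk : hc_task R) (tI tE t ti : R) :
  valid_hc_task tk ->
  0 <= tI -> tI <= tE -> tE <= t ->
  tI <= ti -> ti <= tE ->
  dbf tk t ti <= Num.max (dbf tk t tI) (dbf tk t tE).
Proof.
move=> v h0 hIE hEt hIi hiE; have v' := v; case: v' => hT [hCL [hCH [hDL [hD hDT]]]].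
case: (boolP (ti == tE)) => [/eqP->|hne]; first by rewrite le_max lexx orbT.
have htiE : ti < tE by rewrite lt_neqAle hne.
have hti_t : ti < t by apply: lt_le_trans hEt.
set M := Num.max _ _.
have hC : ~~ (t - ti < D_ tk - DL tk) -> dbf_c tk t ti <= M.
  move=> h.
  have h1 := C_anti _ t _ _ v hIi (le_lt_trans hIi hti_t).
  have h2 : ~~ (t - tI < D_ tk - DL tk) by rewrite -leNgt; rewrite -leNgt in h; lra.
  have h3 := dbf_geC _ _ _ v h2.
  apply: le_trans h1 _; apply: le_trans h3 _; by rewrite le_max lexx.
have hB : t - ti < D_ tk -> dbf_b tk t ti <= M.
  move=> h.
  have [_ [e|[a [b e]]]] := B_cases _ t ti v.
    rewrite e.
    have h1 := H_mono _ t _ _ v hiE.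
    have [h2 _] := B_cases _ t tE v.
    have h3 := dbf_geB _ t tE v ltac:(lra).
    apply: le_trans h1 _; apply: le_trans h2 _; apply: le_trans h3 _.
    by rewrite le_max lexx orbT.
  rewrite e; apply: le_trans (hC _).
    apply: CH_case => //; lra.
  by rewrite -leNgt; lra.
rewrite /dbf; case: ifP => h1.
  by apply: hB; lra.
case: ifP => h2.
  by apply: hC; rewrite h1.
rewrite ge_max; apply/andP; split.
  by apply: hB; rewrite ltNge h2.
by apply: hC; rewrite h1.
Qed.
End H.

Theorem lemma5 (R : realType) (tk : hc_task R) (tI tE t ti : R) :
  valid_hc_task tk ->
  0 <= tI -> tI <= tE -> tE <= t ->
  tI <= ti -> ti <= tE ->
  dbf tk t ti <= Num.max (dbf tk t tI) (dbf tk t tE).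
Proof. exact: main_sec. Qed.
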